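(* Let $K$ be an $\mathcal R$-dioid, $m\ge 2$, and let $\phi\in K\otimes_{\mathcal R}C_m'$ be given as $\phi=S(U+X+V+W\pi)^*F$, where $\pi=q_0p_0$ and, for some $n\ge 0$, $S\in\{0,1\}^{1\times n}$, $F\in\{0,1\}^{n\times 1}$, $X\in K^{n\times n}$, $W\in\{0,1\}^{n\times n}$, $U\in\{0,p_1,\ldots,p_{m-1}\}^{n\times n}$, $V\in\{0,q_1,\ldots,q_{m-1}\}^{n\times n}$. Then the inequation $y\ge (UyV+X)^*$ has a least solution $N$ in $\mathrm{Mat}_{n\times n}(K\otimes_{\mathcal R}C_m')$, and \[ p_0\,\phi\, q_0 = SN(WN)^*F \in Z_{C_m'}K. \]
   Context: An $\mathcal R$-dioid is a dioid in which every regular subset $A$ of its multiplicative monoid has a least upper bound $\sum A$ with $\sum(AB)=(\sum A)(\sum B)$; equivalently, a $*$-continuous Kleene algebra (Kleene algebra with $ac^*b=\sup_n ac^nb$). An $\mathcal R$-morphism is a dioid morphism preserving suprema of regular sets. An $\mathcal R$-congruence on an $\mathcal R$-dioid is a semiring congruence $\rho$ such that if regular sets $U,U'$ have the same downward closure modulo $\rho$, then $(\sum U)/\rho=(\sum U')/\rho$. For $m\ge 1$, $\Delta_m=\{p_0,\dots,p_{m-1}\}\cup\{q_0,\dots,q_{m-1}\}$ and the polycyclic $\mathcal R$-dioid is $C_m'=\mathcal R\Delta_m^*/\rho$, where $\mathcal R\Delta_m^*$ is the algebra of regular languages over $\Delta_m$ and $\rho$ is the least $\mathcal R$-congruence containing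 $p_iq_j=\delta_{i,j}$ for $i,j<m$ (Kronecker delta). $K\otimes_{\mathcal R}C_m'$ is the tensor product in the category of $\mathcal R$-dioids (universal $\mathcal R$-dioid receiving $\mathcal R$-morphisms from $K$ and $C_m'$ whose images commute elementwise); elements of $K$ and $C_m'$ are identified with their images. $Z_{C_m'}K$ denotes the set of elements of $K\otimes_{\mathcal R}C_m'$ commuting with every element of $C_m'$. Matrices over a Kleene algebra carry the standard matrix Kleene algebra structure; an element multiplied with a matrix is identified with the corresponding diagonal matrix. *)

(* Defs.v *)
From HB Require Import structures.
From mathcomp Require Import all_boot all_algebra.
From Stdlib Require Import ClassicalEpsilon.
Set Implicit Arguments. Unset Strict Implicit. Unset Printing Implicit Defensive.
Import GRing.Theory.
Local Open Scope ring_scope.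

Section RegularSets.
Variables (M : Type) (mul : M -> M -> M) (one : M).

Definition set_mul (A B : M -> Prop) : M -> Prop :=
  fun x => exists a b, A a /\ B b /\ x = mul a b.

Definition set_star (A : M -> Prop) : M -> Prop :=
  fun x => exists s : seq M, List.Forall A s /\ x = foldr mul one s.

Inductive regular_set : (M -> Prop) -> Prop :=
| reg_finite : forall s : seq M, regular_set (fun x => List.In x s)
| reg_union : forall A B, regular_set A -> regular_set B ->
    regular_set (fun x => A x \/ B x)
| reg_mul : forall A B, regular_set A -> regular_set B ->
    regular_set (set_mul A B)
| reg_star : forall A, regular_set A -> regular_set (set_star A)
| reg_ext : forall A B, regular_set A -> (forall x, A x <-> B x) ->
    regular_set B.
End RegularSets.

Definition dle {R : pzSemiRingType} (x y : R) : Prop := x + y = y.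

Definition is_lub {R : pzSemiRingType} (A : R -> Prop) (s : R) : Prop :=
  (forall a, A a -> dle a s) /\
  (forall t, (forall a, A a -> dle a t) -> dle s t).

HB.mixin Record PzSemiRing_isRDioid R of GRing.PzSemiRing R := {
  addrr_idem : forall x : R, x + x = x;
  rsup_exists : forall A : R -> Prop,
    regular_set (@GRing.mul R) 1 A -> exists s : R, is_lub A s;
  rsup_mul : forall (A B : R -> Prop) (s t : R),
    regular_set (@GRing.mul R) 1 A -> regular_set (@GRing.mul R) 1 B ->
    is_lub A s -> is_lub B t -> is_lub (set_mul (@GRing.mul R) A B) (s * t)
}.

#[short(type="rDioidType")]
HB.structure Definition RDioid :=
  { R of PzSemiRing_isRDioid R & GRing.PzSemiRing R }.

Definition image {A B : Type} (f : A -> B) (P : A -> Prop) : B -> Prop :=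
  fun y => exists2 x, P x & y = f x.

Definition Rmorphism (K D : rDioidType) (f : K -> D) : Prop :=
  [/\ f 0 = 0, f 1 = 1,
      (forall x y, f (x + y) = f x + f y),
      (forall x y, f (x * y) = f x * f y) &
      forall (A : K -> Prop) (s : K), regular_set (@GRing.mul K) 1 A ->
        is_lub A s -> is_lub (image f A) (f s)].

Section Languages.
Variable Sig : Type.

Definition lang := seq Sig -> Prop.
Definition regular_lang (a : lang) : Prop := regular_set (@cat Sig) [::] a.
Definition rlang := {a : lang | regular_lang a}.

Lemma regular_lang_empty : regular_lang (fun _ => False).
Proof. apply: reg_ext (reg_finite _ _ [::]) _ => x; split => //. Qed.

Lemma regular_lang_eps : regular_lang (fun w => w = [::]).
Proof.
apply: reg_ext (reg_finite _ _ [:: [::]]) _ => x /=.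
by split; [case=> // | move=> ->; left].
Qed.

Lemma regular_lang_word (u : seq Sig) : regular_lang (fun w => w = u).
Proof.
apply: reg_ext (reg_finite _ _ [:: u]) _ => x /=.
by split; [case=> // | move=> ->; left].
Qed.

Lemma regular_lang_union (a b : rlang) :
  regular_lang (fun w => sval a w \/ sval b w).
Proof. exact: reg_union (svalP a) (svalP b). Qed.

Lemma regular_lang_cat (a b : rlang) :
  regular_lang (set_mul (@cat Sig) (sval a) (sval b)).
Proof. exact: reg_mul (svalP a) (svalP b). Qed.

Definition rempty : rlang := exist _ _ regular_lang_empty.
Definition reps : rlang := exist _ _ regular_lang_eps.
Definition rword (u : seq Sig) : rlang := exist _ _ (regular_lang_word u).
Definition runion (a b : rlang) : rlang := exist _ _ (regular_lang_union a b).
Definition rcat (a b : rlang) : rlang := exist _ _ (regular_lang_cat a b).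

Definition is_union (U : rlang -> Prop) (s : rlang) : Prop :=
  forall w, sval s w <-> exists2 a, U a & sval a w.

Definition regular_family (U : rlang -> Prop) : Prop :=
  regular_set rcat reps U.

(* R-congruence on R Sig^*: a semiring congruence r such that regular sets
   with the same downward closure modulo r have r-equivalent sums.
   ([x] <= [u] modulo r means  r (x + u) u.) *)
Definition is_Rcongruence (r : rlang -> rlang -> Prop) : Prop :=
  [/\ (forall a, r a a),
      (forall a b, r a b -> r b a),
      (forall a b c, r a b -> r b c -> r a c),
      (forall a a' b b', r a a' -> r b b' ->
          r (runion a b) (runion a' b') /\ r (rcat a b) (rcat a' b')) &
      (forall (U U' : rlang -> Prop) (s s' : rlang),
          regular_family U -> regular_family U' ->
          is_union U s -> is_union U' s' ->
          (forall x, (exists2 u, U u & r (runion x u) u) <->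
                     (exists2 u, U' u & r (runion x u) u)) ->
          r s s')].
End Languages.

(* Letters: inl i = p_i, inr i = q_i  (i < m).                          *)
Definition Delta (m : nat) : Type := ('I_m + 'I_m)%type.

Definition rhoC (m : nat) (a b : rlang (Delta m)) : Prop :=
  forall r : rlang (Delta m) -> rlang (Delta m) -> Prop,
    is_Rcongruence r ->
    (forall i j : 'I_m,
        r (rword [:: inl i; inr j]) (if i == j then reps _ else rempty _)) ->
    r a b.

(* An R-morphism C_m' -> D, given through its composite
   g : R Delta_m^* -> D with the quotient map (so g is constant on rho-classes). *)
Definition CRmorphism (m : nat) (D : rDioidType) (g : rlang (Delta m) -> D) : Prop :=
  [/\ (forall a b, rhoC a b -> g a = g b),
      g (rempty _) = 0 /\ g (reps _) = 1,
      (forall a b, g (runion a b) = g a + g b),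
      (forall a b, g (rcat a b) = g a * g b) &
      forall (U : rlang (Delta m) -> Prop) (s : rlang (Delta m)),
        regular_family U -> is_union U s -> is_lub (image g U) (g s)].

Definition is_tensor (K : rDioidType) (m : nat) (T : rDioidType)
    (iK : K -> T) (jC : rlang (Delta m) -> T) : Prop :=
  [/\ Rmorphism iK, CRmorphism jC,
      (forall x a, iK x * jC a = jC a * iK x) &
      forall (D : rDioidType) (f : K -> D) (g : rlang (Delta m) -> D),
        Rmorphism f -> CRmorphism g -> (forall x a, f x * g a = g a * f x) ->
        exists h : T -> D,
          [/\ Rmorphism h, (forall x, h (iK x) = f x),
              (forall a, h (jC a) = g a) &
              forall h' : T -> D, Rmorphism h' -> (forall x, h' (iK x) = f x) ->
                (forall a, h' (jC a) = g a) -> forall y, h' y = h y]].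

Definition pgen (m : nat) (T : rDioidType) (jC : rlang (Delta m) -> T) (i : 'I_m) : T :=
  jC (rword [:: inl i]).
Definition qgen (m : nat) (T : rDioidType) (jC : rlang (Delta m) -> T) (i : 'I_m) : T :=
  jC (rword [:: inr i]).

Definition centralizerC (m : nat) (T : rDioidType) (jC : rlang (Delta m) -> T) (x : T) : Prop :=
  forall a, x * jC a = jC a * x.

Definition lubc (R : rDioidType) (A : R -> Prop) : R :=
  epsilon (inhabits 0) (fun s => is_lub A s).

Definition mxpow (R : rDioidType) (n : nat) (A : 'M[R]_n) (k : nat) : 'M[R]_n :=
  iter k (mulmx A) 1%:M.

Definition mxstar (R : rDioidType) (n : nat) (A : 'M[R]_n) : 'M[R]_n :=
  \matrix_(i, j) lubc (fun x => exists k, x = mxpow A k i j).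

Definition mxle (R : rDioidType) (n m : nat) (A B : 'M[R]_(n, m)) : Prop :=
  forall i j, dle (A i j) (B i j).

(* Main.v *)
Require Import Defs.
From HB Require Import structures.
From mathcomp Require Import all_boot all_algebra.
From Stdlib Require Import ClassicalEpsilon ProofIrrelevance FunctionalExtensionality PropExtensionality.
Set Implicit Arguments. Unset Strict Implicit. Unset Printing Implicit Defensive.
Import GRing.Theory.
Local Open Scope ring_scope.

Section Order.
Variable R : rDioidType.
Implicit Types x y z a b : R.

Lemma dle_refl x : dle x x.
Proof. exact: addrr_idem. Qed.

Lemma dle_trans y x z : dle x y -> dle y z -> dle x z.
Proof. rewrite /dle => h1 h2. by rewrite -h2 addrA h1. Qed.

Lemma dle_anti x y : dle x y -> dle y x -> x = y.
Proof. rewrite /dle => h1 h2. by rewrite -h1 addrC h2. Qed.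

Lemma dle0 x : dle 0 x.
Proof. by rewrite /dle add0r. Qed.

Lemma dle_addl x y : dle x (x + y).
Proof. by rewrite /dle addrA addrr_idem. Qed.

Lemma dle_addr x y : dle y (x + y).
Proof. rewrite addrC; exact: dle_addl. Qed.

Lemma dle_addP x y z : dle (x + y) z <-> dle x z /\ dle y z.
Proof.
split.
  move=> h; split; [apply: dle_trans h; exact: dle_addl|apply: dle_trans h; exact: dle_addr].
rewrite /dle => -[h1 h2]. by rewrite -addrA h2 h1.
Qed.

Lemma dle_add x y z : dle x z -> dle y z -> dle (x + y) z.
Proof. by move=> h1 h2; apply/dle_addP. Qed.

Lemma dle_add2 x y x' y' : dle x y -> dle x' y' -> dle (x + x') (y + y').
Proof.
move=> h1 h2; apply: dle_add.
  apply: dle_trans h1 _; exact: dle_addl.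
apply: dle_trans h2 _; exact: dle_addr.
Qed.

Lemma dle_mull a x y : dle x y -> dle (a * x) (a * y).
Proof. by rewrite /dle => h; rewrite -mulrDr h. Qed.

Lemma dle_mulr a x y : dle x y -> dle (x * a) (y * a).
Proof. by rewrite /dle => h; rewrite -mulrDl h. Qed.

Lemma dle_mul x y x' y' : dle x y -> dle x' y' -> dle (x * x') (y * y').
Proof.
move=> h1 h2; apply: (dle_trans (y := x * y')); [exact: dle_mull|exact: dle_mulr].
Qed.

Lemma dle_sum (I : finType) (F : I -> R) t :
  (forall i, dle (F i) t) -> dle (\sum_i F i) t.
Proof.
move=> h; apply: (big_ind (fun u => dle u t)); first exact: dle0.
  by move=> u v; apply: dle_add.
by move=> i _; apply: h.
Qed.

Lemma dle_term (I : finType) (F : I -> R) i : dle (F i) (\sum_j F j).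
Proof. rewrite (bigD1 i) //=; exact: dle_addl. Qed.

Lemma lub_unique (A : R -> Prop) s t : is_lub A s -> is_lub A t -> s = t.
Proof.
move=> [h1 h2] [h3 h4]; apply: dle_anti; [apply: h2 h3 | apply: h4 h1].
Qed.

Definition regR (A : R -> Prop) := regular_set (@GRing.mul R) 1 A.

Lemma reg_single x : regR (fun y => y = x).
Proof.
apply: reg_ext (reg_finite _ _ [:: x]) _ => y /=.
by split; [case=> // <- | move=> ->; left].
Qed.

Lemma lub_single x : is_lub (fun y => y = x) x.
Proof. split; first by move=> a ->; exact: dle_refl. by move=> t; apply. Qed.

Lemma lub_mulsl (A : R -> Prop) s x : regR A -> is_lub A s ->
  is_lub (set_mul (@GRing.mul R) (fun y => y = x) A) (x * s).
Proof. move=> rA lA; apply: rsup_mul => //; [exact: reg_single|exact: lub_single]. Qed.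

Lemma lub_mulsr (A : R -> Prop) s x : regR A -> is_lub A s ->
  is_lub (set_mul (@GRing.mul R) A (fun y => y = x)) (s * x).
Proof. move=> rA lA; apply: rsup_mul => //; [exact: reg_single|exact: lub_single]. Qed.

Lemma reg_mulsl (A : R -> Prop) x : regR A -> regR (set_mul (@GRing.mul R) (fun y => y = x) A).
Proof. move=> rA; apply: reg_mul => //; exact: reg_single. Qed.

Lemma lub_mul_le (A : R -> Prop) s x y z : regR A -> is_lub A s ->
  (forall a, A a -> dle (x * a * y) z) -> dle (x * s * y) z.
Proof.
move=> rA lA h.
have l1 := lub_mulsl x rA lA.
have l2 := lub_mulsr y (reg_mulsl x rA) l1.
apply: l2.2 => a [b [c [[d [e [-> [Ae ->]]] [-> ->]]]]].
exact: h.
Qed.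

Lemma lub_ge (A : R -> Prop) s a : is_lub A s -> A a -> dle a s.
Proof. by move=> [h _]; apply: h. Qed.

End Order.

Section Paths.
Variables (T : rDioidType) (n : nat) (M : 'M[T]_n).

Fixpoint pw (i : 'I_n) (s : seq 'I_n) (j : 'I_n) : T :=
  match s with [::] => M i j | k :: s' => M i k * pw k s' j end.

Lemma pw_cat i s1 k s2 j : pw i (s1 ++ k :: s2) j = pw i s1 k * pw k s2 j.
Proof. elim: s1 i => [|h s1 IH] i //=. by rewrite IH mulrA. Qed.

Definition Ep (r : nat) (i j : 'I_n) : T -> Prop :=
  fun x => exists s, all (fun k : 'I_n => (k < r)%N) s /\ x = pw i s j.

Lemma split_r (r : nat) (k : 'I_n) (hk : nat_of_ord k = r) s :
  all (fun k : 'I_n => (k < r.+1)%N) s ->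
  all (fun k : 'I_n => (k < r)%N) s \/
  exists s1 s2, [/\ s = s1 ++ k :: s2, all (fun k : 'I_n => (k < r)%N) s1 &
                     all (fun k : 'I_n => (k < r.+1)%N) s2].
Proof.
elim: s => [|h s IH] /=; first by left.
case/andP=> hh hs.
case: (eqVneq h k) => [->|hne].
  right; exists [::], s; split => //.
have hr : (h < r)%N.
  rewrite ltnS leq_eqVlt in hh; case/orP: hh => // /eqP e.
  by case/eqP: hne; apply: val_inj; rewrite /= e hk.
case: (IH hs) => [a|[s1 [s2 [-> a1 a2]]]].
  by left; rewrite hr.
right; exists (h :: s1), s2; split => //=; by rewrite hr.
Qed.

Lemma Ep_star_aux r (k : 'I_n) (hk : nat_of_ord k = r) j : forall (l : nat) s,
  (size s <= l)%N -> all (fun k : 'I_n => (k < r.+1)%N) s ->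
  set_mul (@GRing.mul T) (set_star (@GRing.mul T) 1 (Ep r k k)) (Ep r k j) (pw k s j).
Proof.
elim=> [|l IH] s hs ha.
  have -> : s = [::] by case: s hs ha.
  exists 1, (M k j); split; last split.
  - by exists [::].
  - by exists [::].
  - by rewrite mul1r.
case: (split_r hk ha) => [a|[s1 [s2 [e a1 a2]]]].
  exists 1, (pw k s j); split; last split.
  - by exists [::].
  - by exists s.
  - by rewrite mul1r.
have : (size s2 <= l)%N.
  move: hs; rewrite e size_cat /= => h; rewrite -ltnS; apply: leq_trans h.
  by rewrite addnS ltnS leq_addl.
move=> /(IH _) /(_ a2) [x [y [[ls [hl ->]] [hy ey]]]].
exists (pw k s1 k * foldr *%R 1 ls), y; split; last split => //.
  exists (pw k s1 k :: ls); split => //. constructor => //. by exists s1.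
by rewrite e pw_cat ey mulrA.
Qed.

Lemma Ep_star_inv r (k : 'I_n) (hk : nat_of_ord k = r) j ls s :
  List.Forall (Ep r k k) ls -> all (fun k : 'I_n => (k < r)%N) s ->
  exists s', all (fun k : 'I_n => (k < r.+1)%N) s' /\ foldr *%R 1 ls * pw k s j = pw k s' j.
Proof.
move=> hl hs; elim: hl => [|y l [s1 [a1 ->]] _ [s' [a' e']]] /=.
  exists s; split; last by rewrite mul1r.
  apply/allP => x /(allP hs) h; exact: ltnW.
exists (s1 ++ k :: s'); split.
  rewrite all_cat /= a' ?hk ltnSn !andbT.
  apply/allP => x /(allP a1) h; exact: ltnW.
by rewrite pw_cat -e' mulrA.
Qed.

Lemma Ep_regular r : (r <= n)%N -> forall i j, regR (Ep r i j).
Proof.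
elim: r => [|r IH] hr i j.
  apply: reg_ext (reg_finite _ _ [:: M i j]) _ => x /=; split.
    by case=> // <-; exists [::].
  by case=> [[|h s] [//= _ ->]]; left.
have hrn : (r < n)%N by [].
pose k := Ordinal hrn.
have hk : nat_of_ord k = r by [].
have IH' := IH (ltnW hr).
apply: reg_ext (reg_union (IH' i j) (reg_mul (reg_mul (IH' i k) (reg_star (IH' k k))) (IH' k j))) _.
move=> x; split.
  case=> [[s [a ->]]|].
    exists s; split => //; apply/allP => y /(allP a) h; exact: ltnW.
  move=> [y [z [[u [v [[s1 [a1 ->]] [[ls [hl ->]] ->]]]] [[s3 [a3 ->]] ->]]]].
  have [s' [a' e']] := Ep_star_inv hk j hl a3.
  exists (s1 ++ k :: s'); split.
    rewrite all_cat /= a' ?hk ltnSn !andbT.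
    apply/allP => w /(allP a1) h; exact: ltnW.
  by rewrite pw_cat -e' mulrA.
move=> [s [a ->]].
case: (split_r hk a) => [a0|[s1 [s2 [e a1 a2]]]].
  by left; exists s.
right.
have [y [z [hy [hz ez]]]] := Ep_star_aux hk j (leqnn (size s2)) a2.
exists (pw i s1 k * y), z; split; last split => //.
  exists (pw i s1 k), y; split => //. by exists s1.
by rewrite e pw_cat ez mulrA.
Qed.

Definition Paths (i j : 'I_n) : T -> Prop :=
  fun x => (i = j /\ x = 1) \/ exists s, x = pw i s j.

Lemma Paths_regular i j : regR (Paths i j).
Proof.
apply: reg_ext (reg_union (reg_finite _ _ (if i == j then [:: 1] else [::]))
                           (Ep_regular (leqnn n) i j)) _.
move=> x; split.
  case=> [|[s [_ ->]]]; last by right; exists s.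
  case: eqP => // -> [] // <-; by left.
case=> [[-> ->]|[s ->]].
  by left; rewrite eqxx; left.
right; exists s; split => //; apply/allP => y _; exact: ltn_ord.
Qed.

Lemma mxpowS k : mxpow M k.+1 = M *m mxpow M k.
Proof. by []. Qed.

Lemma pw_le_pow i s j : dle (pw i s j) (mxpow M (size s).+1 i j).
Proof.
elim: s i => [|h s IH] i.
  rewrite mxpowS /mxpow /= mulmx1; exact: dle_refl.
rewrite [pw _ _ _]/= [size _]/= mxpowS mxE.
apply: dle_trans (dle_term _ h); exact: dle_mull.
Qed.

Lemma pow_le_aux k : forall i j a t,
  (forall s, size s = k -> dle (a * pw i s j) t) -> dle (a * mxpow M k.+1 i j) t.
Proof.
elim: k => [|k IH] i j a t h.
  rewrite mxpowS /mxpow /= mulmx1.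
  by have := h [::] erefl.
rewrite mxpowS mxE mulr_sumr; apply: dle_sum => l.
rewrite mulrA; apply: IH => s hs.
rewrite -mulrA; apply: (h (l :: s)); by rewrite /= hs.
Qed.

Lemma Paths_lub_pow i j s : is_lub (Paths i j) s ->
  is_lub (fun x => exists k, x = mxpow M k i j) s.
Proof.
move=> [ub lst]; split.
  move=> x [[|k] ->].
    rewrite /mxpow /= mxE; case: (eqVneq i j) => [e|ne] /=.
      apply: ub; by left.
    exact: dle0.
  rewrite -[mxpow _ _ _ _]mul1r; apply: pow_le_aux => s' _; rewrite mul1r.
  apply: ub; right; by exists s'.
move=> t ht; apply: lst => x [[e ->]|[s' ->]].
  have := ht (mxpow M 0 i j) (ex_intro _ 0%N erefl).
  by rewrite /mxpow /= mxE e eqxx.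
apply: dle_trans (pw_le_pow _ _ _) _; apply: ht; by eexists.
Qed.

Lemma mxstar_lub i j : is_lub (Paths i j) (mxstar M i j).
Proof.
have [s hs] := rsup_exists _ (Paths_regular i j).
suff -> : mxstar M i j = s by [].
rewrite /mxstar mxE /lubc.
have hp := Paths_lub_pow hs.
have := epsilon_spec (inhabits 0) (fun s => is_lub (fun x => exists k, x = mxpow M k i j) s)
   (ex_intro _ s hp).
move=> h; exact: lub_unique h hp.
Qed.

Lemma Paths_le_pow i j w : Paths i j w -> exists k, dle w (mxpow M k i j).
Proof.
case=> [[e ->]|[s ->]].
  exists 0%N; rewrite /mxpow /= mxE e eqxx; exact: dle_refl.
exists (size s).+1; exact: pw_le_pow.
Qed.

Lemma pow_le_star k i j : dle (mxpow M k i j) (mxstar M i j).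
Proof.
have [ub _] := Paths_lub_pow (mxstar_lub i j).
apply: ub; by exists k.
Qed.

End Paths.

Section KA.
Variable R : pzSemiRingType.
Hypothesis idem : forall x : R, x + x = x.
Variable star : R -> R.
Hypothesis s1 : forall x, dle 1 (star x).
Hypothesis s2 : forall x, dle (x * star x) (star x).
Hypothesis s3 : forall x, dle (star x * x) (star x).
Hypothesis s4 : forall a b x, dle (b + a * x) x -> dle (star a * b) x.
Hypothesis s5 : forall a b x, dle (b + x * a) x -> dle (b * star a) x.
Implicit Types x y z a b : R.

Lemma kdle_refl x : dle x x. Proof. exact: idem. Qed.
Lemma kdle_trans y x z : dle x y -> dle y z -> dle x z.
Proof. rewrite /dle => h1 h2. by rewrite -h2 addrA h1. Qed.
Lemma kdle_anti x y : dle x y -> dle y x -> x = y.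
Proof. rewrite /dle => h1 h2. by rewrite -h1 addrC h2. Qed.
Lemma kdle_addl x y : dle x (x + y).
Proof. by rewrite /dle addrA idem. Qed.
Lemma kdle_addr x y : dle y (x + y).
Proof. rewrite addrC; exact: kdle_addl. Qed.
Lemma kdle_add x y z : dle x z -> dle y z -> dle (x + y) z.
Proof. rewrite /dle => h1 h2. by rewrite -addrA h2 h1. Qed.
Lemma kdle_mull a x y : dle x y -> dle (a * x) (a * y).
Proof. by rewrite /dle => h; rewrite -mulrDr h. Qed.
Lemma kdle_mulr a x y : dle x y -> dle (x * a) (y * a).
Proof. by rewrite /dle => h; rewrite -mulrDl h. Qed.
Lemma kdle_mul x y x' y' : dle x y -> dle x' y' -> dle (x * x') (y * y').
Proof.
move=> h1 h2; apply: (kdle_trans (y := x * y')); [exact: kdle_mull|exact: kdle_mulr].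
Qed.

Lemma slide x y : star (x * y) * x = x * star (y * x).
Proof.
apply: kdle_anti.
  apply: s4; apply: kdle_add.
    rewrite -{1}[x]mulr1; apply: kdle_mull; exact: s1.
  rewrite -!mulrA; apply: kdle_mull; rewrite mulrA; exact: s2.
apply: s5; apply: kdle_add.
  rewrite -{1}[x]mul1r; apply: kdle_mulr; exact: s1.
rewrite -mulrA [x * (y * x)]mulrA mulrA; apply: kdle_mulr; exact: s3.
Qed.

Lemma star_mono x y : dle x y -> dle (star x) (star y).
Proof.
move=> h; rewrite -[star x]mulr1; apply: s4; apply: kdle_add; first exact: s1.
apply: kdle_trans (s2 y); exact: kdle_mulr.
Qed.

Lemma star_star_le x : dle (star x * star x) (star x).
Proof. apply: s4; apply: kdle_add; [exact: kdle_refl|exact: s2]. Qed.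

Lemma denest x y : star (x + y) = star x * star (y * star x).
Proof.
apply: kdle_anti.
  rewrite -[star (x + y)]mulr1; apply: s4; apply: kdle_add.
    rewrite -[1]mulr1; apply: kdle_mul; exact: s1.
  rewrite mulrDl; apply: kdle_add.
    rewrite mulrA; apply: kdle_mulr; exact: s2.
  rewrite mulrA; apply: (kdle_trans (y := star (y * star x))); first exact: s2.
  rewrite -{1}[star (y * _)]mul1r; apply: kdle_mulr; exact: s1.
apply: s5; apply: kdle_add.
  apply: star_mono; exact: kdle_addl.
rewrite !mulrA.
apply: (kdle_trans (y := star (x + y) * star x)).
  apply: kdle_mulr; apply: (kdle_trans (y := star (x + y) * (x + y))).
    apply: kdle_mull; exact: kdle_addr.
  exact: s3.
apply: (kdle_trans (y := star (x + y) * star (x + y))).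
  apply: kdle_mull; apply: star_mono; exact: kdle_addl.
exact: star_star_le.
Qed.

End KA.

Section MxKA.
Variables (T : rDioidType) (n : nat).
Implicit Types A B M x y z : 'M[T]_n.

Lemma mx_idem A : A + A = A.
Proof. apply/matrixP => i j; rewrite mxE; exact: addrr_idem. Qed.

Lemma mxdleP A B : dle A B <-> mxle A B.
Proof.
split.
  by move=> h i j; rewrite /dle -{2}h mxE.
move=> h; apply/matrixP => i j; rewrite mxE; exact: h.
Qed.

Lemma mxdle_entry A B i j : dle A B -> dle (A i j) (B i j).
Proof. by move/mxdleP; apply. Qed.

Lemma mx3_term x A y i j c d : dle (x i c * A c d * y d j) ((x * A * y) i j).
Proof.
change ((x * A * y) i j) with ((x *m A *m y) i j).
rewrite mxE; apply: dle_trans (dle_term _ d); apply: dle_mulr.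
rewrite mxE; exact: (dle_term (fun c => x i c * A c d) c).
Qed.

Lemma mx2_term x y i j c : dle (x i c * y c j) ((x * y) i j).
Proof.
change ((x * y) i j) with ((x *m y) i j).
rewrite mxE; exact: (dle_term (fun c => x i c * y c j) c).
Qed.

Lemma star_cont M x y z :
  (forall k, dle (x * mxpow M k * y) z) -> dle (x * mxstar M * y) z.
Proof.
move=> h; apply/mxdleP => i j.
change ((x * mxstar M * y) i j) with ((x *m mxstar M *m y) i j).
rewrite mxE; apply: dle_sum => d; rewrite mxE mulr_suml; apply: dle_sum => c.
apply: (lub_mul_le (Paths_regular M c d) (mxstar_lub M c d)) => w hw.
have [k hk] := Paths_le_pow hw.
apply: dle_trans (mxdle_entry i j (h k)).
apply: dle_trans (mx3_term _ _ _ _ _ c d).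
apply: dle_mulr; exact: dle_mull.
Qed.

Lemma pow_le M k : dle (mxpow M k) (mxstar M).
Proof. apply/mxdleP => i j; exact: pow_le_star. Qed.

Lemma mxpowS' M k : mxpow M k.+1 = M * mxpow M k.
Proof. by []. Qed.

Lemma mxpow0 M : mxpow M 0 = 1.
Proof. by []. Qed.

Lemma mxpowSr M k : mxpow M k.+1 = mxpow M k * M.
Proof.
elim: k => [|k IH]; first by rewrite mxpowS' mxpow0 mulr1 mul1r.
by rewrite [LHS]mxpowS' [in LHS]IH mulrA -mxpowS'.
Qed.

Lemma mxs1 M : dle 1 (mxstar M).
Proof. rewrite -(mxpow0 M); exact: pow_le. Qed.

Lemma mxs2 M : dle (M * mxstar M) (mxstar M).
Proof.
rewrite -[M * mxstar M]mulr1; apply: star_cont => k.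
rewrite mulr1 -mxpowS'; exact: pow_le.
Qed.

Lemma mxs3 M : dle (mxstar M * M) (mxstar M).
Proof.
rewrite -[X in dle X _]mul1r mulrA; apply: star_cont => k.
rewrite mul1r -mxpowSr; exact: pow_le.
Qed.

Lemma mxs4 a b x : dle (b + a * x) x -> dle (mxstar a * b) x.
Proof.
move=> h; rewrite -[X in dle X _]mul1r mulrA; apply: star_cont => k.
rewrite mul1r; elim: k => [|k IH].
  rewrite mxpow0 mul1r; apply: kdle_trans (kdle_addl mx_idem _ _) h; exact: mx_idem.
rewrite mxpowS' -mulrA.
apply: kdle_trans h; apply: kdle_trans (kdle_addr mx_idem _ _); exact: kdle_mull.
Qed.

Lemma mxs5 a b x : dle (b + x * a) x -> dle (b * mxstar a) x.
Proof.
move=> h; rewrite -[X in dle X _]mulr1; apply: star_cont => k.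
rewrite mulr1; elim: k => [|k IH].
  rewrite mxpow0 mulr1; apply: kdle_trans (kdle_addl mx_idem _ _) h; exact: mx_idem.
rewrite mxpowSr mulrA.
apply: kdle_trans h; apply: kdle_trans (kdle_addr mx_idem _ _); exact: kdle_mulr.
Qed.

Lemma mx_slide x y : mxstar (x * y) * x = x * mxstar (y * x).
Proof. exact: (@slide _ (@mxstar T n) mxs1 mxs2 mxs3 mxs4 mxs5). Qed.

Lemma mx_denest x y : mxstar (x + y) = mxstar x * mxstar (y * mxstar x).
Proof. exact: (@denest _ mx_idem (@mxstar T n) mxs1 mxs2 mxs3 mxs4 mxs5). Qed.

End MxKA.

Lemma rword_cat (Sig : Type) (u v : seq Sig) : rcat (rword u) (rword v) = rword (u ++ v).
Proof.
apply: eq_sig_hprop => [x|]; first exact: proof_irrelevance.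
apply: functional_extensionality => w; apply: propositional_extensionality => /=.
split; first by move=> [a [b [-> [-> ->]]]].
by move=> ->; exists u, v.
Qed.

Section Tensor.
Variables (K : rDioidType) (m : nat) (T : rDioidType) (iK : K -> T) (jC : rlang (Delta m) -> T).
Hypothesis hT : is_tensor iK jC.

Definition central (x : T) := forall a, x * jC a = jC a * x.

Lemma jC_mul a b : jC (rcat a b) = jC a * jC b.
Proof. by case: hT => _ [_ _ _ h _] _ _. Qed.
Lemma jC_rho a b : rhoC a b -> jC a = jC b.
Proof. by case: hT => _ [h _ _ _ _] _ _; apply: h. Qed.
Lemma jC_0 : jC (rempty _) = 0.
Proof. by case: hT => _ [_ [h _] _ _ _] _ _. Qed.
Lemma jC_1 : jC (reps _) = 1.
Proof. by case: hT => _ [_ [_ h] _ _ _] _ _. Qed.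
Lemma iK_central x : central (iK x).
Proof. by case: hT => _ _ h _ => a; apply: h. Qed.

Lemma pq i j : pgen jC i * qgen jC j = if i == j then 1 else 0.
Proof.
rewrite /pgen /qgen -jC_mul rword_cat /=.
rewrite (jC_rho (b := if i == j then reps _ else rempty _)).
  by case: eqP => _; [exact: jC_1|exact: jC_0].
by move=> r _ h; apply: h.
Qed.

Lemma central0 : central 0.
Proof. by move=> a; rewrite mul0r mulr0. Qed.
Lemma central1 : central 1.
Proof. by move=> a; rewrite mul1r mulr1. Qed.
Lemma centralD x y : central x -> central y -> central (x + y).
Proof. by move=> hx hy a; rewrite mulrDl mulrDr hx hy. Qed.
Lemma centralM x y : central x -> central y -> central (x * y).
Proof. by move=> hx hy a; rewrite -mulrA hy mulrA hx mulrA. Qed.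
Lemma central01 x : x = 0 \/ x = 1 -> central x.
Proof. by case=> ->; [exact: central0|exact: central1]. Qed.
Lemma central_sum (I : finType) (F : I -> T) : (forall i, central (F i)) -> central (\sum_i F i).
Proof.
move=> h; apply: (big_ind central); [exact: central0|exact: centralD|move=> i _; exact: h].
Qed.

Lemma lub_ext (A B : T -> Prop) s : (forall x, A x <-> B x) -> is_lub A s -> is_lub B s.
Proof.
move=> e [h1 h2]; split; first by move=> a /e; apply: h1.
move=> t ht; apply: h2 => a /e; exact: ht.
Qed.

Lemma central_lub (A : T -> Prop) s : regR A -> is_lub A s ->
  (forall a, A a -> central a) -> central s.
Proof.
move=> rA lA h a.
have l1 := lub_mulsr (jC a) rA lA.
have l2 := lub_mulsl (jC a) rA lA.
apply: lub_unique l1 _; apply: lub_ext l2 => x; split.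
  move=> [y [z [-> [Az ->]]]]; exists z, (jC a); split => //; split => //.
  by rewrite h.
move=> [y [z [Ay [-> ->]]]]; exists (jC a), y; split => //; split => //.
by rewrite h.
Qed.

Lemma central_mx_mul (p r s : nat) (A : 'M[T]_(p, r)) (B : 'M[T]_(r, s)) :
  (forall i j, central (A i j)) -> (forall i j, central (B i j)) ->
  forall i j, central ((A *m B) i j).
Proof.
move=> hA hB i j; rewrite mxE; apply: central_sum => k; exact: centralM.
Qed.

Lemma pw_central (n : nat) (M : 'M[T]_n) : (forall i j, central (M i j)) ->
  forall i s j, central (pw M i s j).
Proof. move=> h i s; elim: s i => [|k s IH] i j /=; [exact: h|exact: centralM]. Qed.

Lemma mxstar_central (n : nat) (M : 'M[T]_n) : (forall i j, central (M i j)) ->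
  forall i j, central (mxstar M i j).
Proof.
move=> h i j; apply: (central_lub (Paths_regular M i j) (mxstar_lub M i j)).
move=> x [[_ ->]|[s ->]]; [exact: central1|exact: pw_central].
Qed.

Lemma mul_scal_r (n : nat) (A : 'M[T]_n) (a : T) i j : (A *m a%:M) i j = A i j * a.
Proof.
rewrite mxE (bigD1 j) //= mxE eqxx mulr1n big1 ?addr0 // => k /negbTE hk.
by rewrite mxE hk mulr0n mulr0.
Qed.

Lemma mul_scal_l (n : nat) (A : 'M[T]_n) (a : T) i j : (a%:M *m A) i j = a * A i j.
Proof.
rewrite mxE (bigD1 i) //= mxE eqxx mulr1n big1 ?addr0 // => k /negbTE hk.
by rewrite mxE eq_sym hk mulr0n mul0r.
Qed.

Lemma scal_comm (n : nat) (A : 'M[T]_n) (a : T) :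
  (forall i j, A i j * a = a * A i j) -> A * a%:M = a%:M * A.
Proof.
move=> h; apply/matrixP => i j.
change ((A *m a%:M) i j = (a%:M *m A) i j).
by rewrite mul_scal_r mul_scal_l h.
Qed.

End Tensor.

Inductive Sums (T : rDioidType) (P : T -> Prop) : T -> Prop :=
| Sums0 : Sums P 0
| Sums1 t : P t -> Sums P t
| Sums2 x y : Sums P x -> Sums P y -> Sums P (x + y).

Lemma sums_le (T : rDioidType) (P : T -> Prop) x a b z :
  Sums P x -> (forall t, P t -> dle (a * t * b) z) -> dle (a * x * b) z.
Proof.
move=> hs h; elim: hs => [|t ht|x1 y1 _ h1 _ h2].
- rewrite mulr0 mul0r; exact: dle0.
- exact: h.
- rewrite mulrDr mulrDl; exact: dle_add.
Qed.

Lemma sums_map (T : rDioidType) (P P' : T -> Prop) (f : T -> T) x :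
  f 0 = 0 -> (forall x y, f (x + y) = f x + f y) ->
  (forall t, P t -> P' (f t)) -> Sums P x -> Sums P' (f x).
Proof.
move=> f0 fD h; elim => [|t ht|x1 y1 _ h1 _ h2].
- rewrite f0; exact: Sums0.
- apply: Sums1; exact: h.
- rewrite fD; exact: Sums2.
Qed.

Lemma sums_id (T : rDioidType) (P P' : T -> Prop) x :
  (forall t, P t -> P' t) -> Sums P x -> Sums P' x.
Proof. move=> h; exact: (@sums_map _ P P' id). Qed.

Section Main.
Variables (K : rDioidType) (m : nat) (T : rDioidType) (iK : K -> T) (jC : rlang (Delta m) -> T).
Hypothesis hT : is_tensor iK jC.
Variables (i0 : 'I_m) (hi0 : nat_of_ord i0 = 0%N).
Variables (n : nat) (X : 'M[K]_n) (U V : 'M[T]_n).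
Hypothesis hU : forall a b, U a b = 0 \/ exists2 k : 'I_m, nat_of_ord k <> 0%N & U a b = pgen jC k.
Hypothesis hV : forall a b, V a b = 0 \/ exists2 k : 'I_m, nat_of_ord k <> 0%N & V a b = qgen jC k.

Local Notation p := (pgen jC).
Local Notation q := (qgen jC).
Local Notation Xm := (map_mx iK X).
Local Notation B := (U + map_mx iK X + V).
Local Notation central := (central jC).

Lemma Bentry a b : B a b = U a b + iK (X a b) + V a b.
Proof. by rewrite !mxE. Qed.

Inductive D : 'I_n -> 'I_n -> T -> Prop :=
| D1 a : D a a 1
| D2 a c b t : D c b t -> D a b (iK (X a c) * t)
| D3 a c d e b k t1 t2 : U a c = p k -> V d e = q k -> D c d t1 -> D e b t2 ->
    D a b (t1 * t2).

Lemma D_central a b t : D a b t -> central t.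
Proof.
elim => {a b t}.
- move=> a; exact: central1.
- move=> a c b t _ h; apply: centralM => //; exact: iK_central.
- move=> a c d e b k t1 t2 _ _ _ h1 _ h2; exact: centralM.
Qed.

Lemma D_cat a c b t1 t2 : D a c t1 -> D c b t2 -> D a b (t1 * t2).
Proof.
move=> h; elim: h b t2 => {a c t1}.
- by move=> a b t2 h; rewrite mul1r.
- move=> a c b t _ IH b' t2 h; rewrite -mulrA; apply: D2; exact: IH.
- move=> a c d e b k t1 t2 hu hv h1 _ _ IH b' t3 h3; rewrite -mulrA.
  apply: D3 hu hv h1 _; exact: IH.
Qed.

Lemma pkq k t : central t -> p k * t * q k = t.
Proof.
move=> ht; rewrite -mulrA /qgen ht mulrA -/(qgen jC k) (pq hT) eqxx mul1r.
done.
Qed.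

Lemma Paths_edge (M : 'M[T]_n) a c b w : Paths M c b w -> Paths M a b (M a c * w).
Proof.
case=> [[-> ->]|[s ->]]; right; first by exists [::]; rewrite mulr1.
by exists (c :: s).
Qed.

Lemma Paths_cat (M : 'M[T]_n) a c b w1 w2 : Paths M a c w1 -> Paths M c b w2 ->
  Paths M a b (w1 * w2).
Proof.
case=> [[-> ->]|[s ->]]; first by rewrite mul1r.
case=> [[<- ->]|[s2 ->]]; right; first by exists s; rewrite mulr1.
exists (s ++ c :: s2); by rewrite pw_cat.
Qed.

Lemma D_path a b t : D a b t -> exists2 w, Paths B a b w & dle t w.
Proof.
elim => {a b t}.
- move=> a; exists 1; [by left|exact: dle_refl].
- move=> a c b t _ [w hw hle]; exists (B a c * w); first exact: Paths_edge.
  apply: dle_mul => //; rewrite Bentry; apply: dle_trans (dle_addl _ _); exact: dle_addr.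
- move=> a c d e b k t1 t2 hu hv h1 [w1 hw1 l1] _ [w2 hw2 l2].
  exists (B a c * w1 * (B d e * w2)).
    apply: (Paths_cat (c := d)); exact: Paths_edge.
  have hc1 := D_central h1.
  rewrite -(pkq k hc1) mulrA.
  have hu' : dle (p k) (B a c).
    rewrite Bentry -hu; apply: dle_trans (dle_addl _ _); exact: dle_addl.
  have hv' : dle (q k) (B d e) by rewrite Bentry -hv; exact: dle_addr.
  exact: dle_mul (dle_mul (dle_mul hu' l1) hv') l2.
Qed.

Fixpoint G (b c : 'I_n) (ks : seq 'I_m) : T -> Prop :=
  match ks with
  | [::] => D c b
  | k :: ks' => fun t => exists d e t1 t2,
      [/\ D c d t1, V d e = q k, G b e ks' t2 & t = t1 * t2]
  end.

Lemma G_cat b c f ks t1 t2 : D c f t1 -> G b f ks t2 -> G b c ks (t1 * t2).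
Proof.
case: ks => [|k ks] /=; first exact: D_cat.
move=> h1 [d [e [s1 [s2 [h2 hv hg ->]]]]].
exists d, e, (t1 * s1), s2; split => //; last by rewrite mulrA.
exact: D_cat h1 h2.
Qed.

Lemma G_X b a c ks t : G b c ks t -> G b a ks (iK (X a c) * t).
Proof.
case: ks => [|k ks] /=; first exact: D2.
move=> [d [e [s1 [s2 [h2 hv hg ->]]]]].
exists d, e, (iK (X a c) * s1), s2; split => //; last by rewrite mulrA.
exact: D2.
Qed.

Lemma G_U b c d k ks t : U c d = p k -> G b d (k :: ks) t -> G b c ks t.
Proof.
move=> hu [e [f [t1 [t2 [h1 hv hg ->]]]]].
apply: G_cat hg; rewrite -[t1]mulr1; apply: D3 hu hv h1 _; exact: D1.
Qed.

Lemma G_V b c d k ks t : V c d = q k -> G b d ks t -> G b c (k :: ks) t.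
Proof.
move=> hv hg; exists c, d, 1, t; split => //; [exact: D1|by rewrite mul1r].
Qed.

Fixpoint Pv (ks : seq 'I_m) : T :=
  match ks with [::] => 1 | k :: ks' => Pv ks' * p k end.

Lemma central_Pv x ks : central x -> x * Pv ks = Pv ks * x.
Proof.
move=> h; elim: ks => [|k ks IH] /=; first by rewrite mul1r mulr1.
by rewrite mulrA IH -!mulrA /pgen h.
Qed.

Lemma p0qk k : nat_of_ord k <> 0%N -> p i0 * q k = 0.
Proof.
move=> hk; rewrite (pq hT); case: eqP => // e; exfalso; apply: hk; by rewrite -e.
Qed.

Lemma pkq0 k : nat_of_ord k <> 0%N -> p k * q i0 = 0.
Proof.
move=> hk; rewrite (pq hT); case: eqP => // e; exfalso; apply: hk; by rewrite e.
Qed.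

Definition okks (ks : seq 'I_m) := all (fun k : 'I_m => nat_of_ord k != 0%N) ks.

Lemma Lbase b ks : okks ks -> Sums (G b b ks) (p i0 * Pv ks * q i0).
Proof.
case: ks => [|k ks] /=.
  move=> _; rewrite mulr1 (pq hT) eqxx; apply: Sums1; exact: D1.
case/andP => /eqP hk _; rewrite -mulrA -mulrA pkq0 // !mulr0; exact: Sums0.
Qed.

Lemma Lstep b c d w' :
  (forall ks, okks ks -> Sums (G b d ks) (p i0 * Pv ks * w' * q i0)) ->
  forall ks, okks ks -> Sums (G b c ks) (p i0 * Pv ks * (B c d * w') * q i0).
Proof.
move=> IH ks hks.
rewrite Bentry !mulrDl !mulrDr !mulrDl.
apply: Sums2; first apply: Sums2.
- case: (hU c d) => [->|[k hk hu]].
    rewrite mul0r mulr0 mul0r; exact: Sums0.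
  rewrite hu !mulrA -(mulrA _ (Pv ks)) -/(Pv (k :: ks)).
  have hk' : okks (k :: ks) by rewrite /okks /=; apply/andP; split => //; apply/eqP.
  apply: sums_id (IH _ hk') => t; exact: G_U hu.
- have -> : p i0 * Pv ks * (iK (X c d) * w') * q i0 =
            iK (X c d) * (p i0 * Pv ks * w' * q i0).
    rewrite !mulrA; congr (_ * _ * _).
    rewrite -mulrA -(@central_Pv (iK (X c d)) ks (iK_central hT (X c d))) mulrA; congr (_ * _).
    by rewrite /pgen (iK_central hT).
  apply: (@sums_map _ _ _ (fun t => iK (X c d) * t)).
  + exact: mulr0.
  + move=> x y; exact: mulrDr.
  + move=> t; exact: G_X.
  + exact: IH.
- case: (hV c d) => [->|[k hk hv]].
    rewrite mul0r mulr0 mul0r; exact: Sums0.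
  rewrite hv; case: ks hks => [|k' ks] /=.
    move=> _; rewrite mulr1 mulrA p0qk // !mul0r; exact: Sums0.
  case/andP => hk' hks.
  rewrite !mulrA -(mulrA _ (p k')) (pq hT).
  case: eqP => [e|_]; last by rewrite mulr0 !mul0r; exact: Sums0.
  rewrite mulr1 e; apply: sums_id (IH ks hks) => t; exact: G_V hv.
Qed.

Lemma Lpath b s : forall c ks, okks ks ->
  Sums (G b c ks) (p i0 * Pv ks * pw B c s b * q i0).
Proof.
elim: s => [|d s IH] c ks hks.
  rewrite [pw _ _ _ _]/= -[B c b]mulr1; apply: Lstep hks => ks' hks'.
  rewrite mulr1; exact: Lbase.
rewrite [pw _ _ _ _]/=; apply: Lstep hks => ks' hks'; exact: IH.
Qed.

Lemma Paths_D a b w : Paths B a b w -> Sums (D a b) (p i0 * w * q i0).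
Proof.
case=> [[-> ->]|[s ->]].
  rewrite mulr1 (pq hT) eqxx; apply: Sums1; exact: D1.
have := @Lpath b s a [::] erefl; by rewrite /= mulr1.
Qed.

Lemma sums_central P x : Sums P x -> (forall t, P t -> central t) -> central x.
Proof.
move=> hs h; elim: hs => [|t ht|x1 y1 _ h1 _ h2]; [exact: central0|exact: h|exact: centralD].
Qed.

Definition N : 'M[T]_n := (p i0)%:M * mxstar B * (q i0)%:M.

Lemma N_entry a b : N a b = p i0 * mxstar B a b * q i0.
Proof.
change (((p i0)%:M *m mxstar B *m (q i0)%:M) a b = p i0 * mxstar B a b * q i0).
by rewrite mul_scal_r mul_scal_l.
Qed.

Lemma N_central a b : central (N a b).
Proof.
rewrite N_entry.
have rP := Paths_regular B a b.
have lP := mxstar_lub B a b.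
apply: (central_lub (A := set_mul *%R (set_mul *%R (fun y => y = p i0) (Paths B a b)) (fun y => y = q i0))).
- apply: reg_mul; [exact: reg_mulsl|exact: reg_single].
- apply: lub_mulsr; [exact: reg_mulsl|exact: lub_mulsl].
move=> x [y [z [[u [w [-> [hw ->]]] [-> ->]]]]].
apply: sums_central (Paths_D hw) _ => t; exact: D_central.
Qed.

Lemma central_sandwich t : central t -> p i0 * t * q i0 = t.
Proof.
move=> ht; rewrite /pgen -ht -mulrA -/(pgen jC i0) (pq hT) eqxx mulr1 //.
Qed.

Lemma D_le_N a b t : D a b t -> dle t (N a b).
Proof.
move=> hD; have [w hw hle] := D_path hD.
rewrite N_entry -(central_sandwich (D_central hD)).
apply: dle_mulr; apply: dle_mull; apply: dle_trans hle _.
exact: lub_ge (mxstar_lub B a b) hw.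
Qed.

Lemma mx4_le (A1 A2 A3 A4 : 'M[T]_n) i j z :
  (forall c d e, dle (A1 i c * A2 c d * A3 d e * A4 e j) z) ->
  dle ((A1 * A2 * A3 * A4) i j) z.
Proof.
move=> h.
change (dle ((A1 *m A2 *m A3 *m A4) i j) z).
rewrite mxE; apply: dle_sum => e; rewrite mxE mulr_suml; apply: dle_sum => d.
rewrite mxE !mulr_suml; apply: dle_sum => c; exact: h.
Qed.

Lemma UNVN_le : dle (U * N * V * N) N.
Proof.
apply/mxdleP => i j; apply: mx4_le => c d e.
rewrite !N_entry.
have -> : U i c * (p i0 * mxstar B c d * q i0) * V d e * (p i0 * mxstar B e j * q i0) =
   (U i c * p i0) * mxstar B c d * (q i0 * V d e * (p i0 * mxstar B e j * q i0)).
  by rewrite !mulrA.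
apply: (lub_mul_le (Paths_regular B c d) (mxstar_lub B c d)) => w1 hw1.
have -> : U i c * p i0 * w1 * (q i0 * V d e * (p i0 * mxstar B e j * q i0)) =
   (U i c * p i0 * w1 * q i0 * V d e * p i0) * mxstar B e j * q i0.
  by rewrite !mulrA.
apply: (lub_mul_le (Paths_regular B e j) (mxstar_lub B e j)) => w2 hw2.
have -> : U i c * p i0 * w1 * q i0 * V d e * p i0 * w2 * q i0 =
   U i c * (p i0 * w1 * q i0) * (V d e * (p i0 * w2 * q i0)).
  by rewrite !mulrA.
apply: (sums_le (Paths_D hw1)) => t1 h1.
have -> : U i c * t1 * (V d e * (p i0 * w2 * q i0)) = (U i c * t1 * V d e) * (p i0 * w2 * q i0) * 1.
  by rewrite mulr1 !mulrA.
apply: (sums_le (Paths_D hw2)) => t2 h2.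
rewrite mulr1.
case: (hU i c) => [->|[k hk hu]]; first by rewrite !mul0r; exact: dle0.
case: (hV d e) => [->|[l hl hv]]; first by rewrite mulr0 mul0r; exact: dle0.
rewrite hu hv.
have -> : p k * t1 * q l = t1 * (p k * q l).
  by rewrite /pgen -(D_central h1) -mulrA.
rewrite (pq hT); case: eqP => [e'|_]; last by rewrite mulr0 mul0r; exact: dle0.
rewrite mulr1 -N_entry; apply: D_le_N; apply: D3 hu _ h1 h2; by rewrite hv e'.
Qed.

Lemma Xm_le_B : dle Xm B.
Proof.
apply/mxdleP => i j; rewrite Bentry mxE; apply: dle_trans (dle_addl _ _); exact: dle_addr.
Qed.

Lemma N_fix : dle (mxstar (U * N * V + Xm)) N.
Proof.
have idm := @mx_idem T n.
rewrite -[mxstar _]mulr1; apply: mxs4; apply: kdle_add.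
  have -> : (1 : 'M[T]_n) = (p i0)%:M * 1 * (q i0)%:M.
    rewrite mulr1; change ((1 : 'M[T]_n) = (p i0)%:M *m (q i0)%:M); by rewrite -scalar_mxM (pq hT) eqxx.
  apply: kdle_mulr; apply: kdle_mull; exact: mxs1.
rewrite mulrDl; apply: kdle_add; first exact: UNVN_le.
rewrite /N !mulrA.
have -> : Xm * (p i0)%:M = (p i0)%:M * Xm.
  apply: scal_comm => a b; by rewrite mxE /pgen (iK_central hT).
rewrite -(mulrA _ Xm); apply: kdle_mulr; apply: kdle_mull.
apply: kdle_trans (mxs2 B); apply: kdle_mulr; exact: Xm_le_B.
Qed.

Section Least.
Variable Y : 'M[T]_n.
Hypothesis hY : mxle (mxstar (U * Y * V + Xm)) Y.
Local Notation C := (U * Y * V + Xm).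

Lemma Centry a c : C a c = (U * Y * V) a c + iK (X a c).
Proof. rewrite {1}mxE; congr (_ + _); by rewrite mxE. Qed.

Lemma D_le_star a b t : D a b t -> dle t (mxstar C a b).
Proof.
elim => {a b t}.
- move=> a; have := mxdle_entry a a (mxs1 C); by rewrite mxE eqxx.
- move=> a c b t _ h.
  apply: dle_trans (mxdle_entry a b (mxs2 C)).
  apply: dle_trans (mx2_term _ _ _ _ c).
  apply: dle_mul => //; rewrite Centry; exact: dle_addr.
- move=> a c d e b k t1 t2 hu hv h1 l1 _ l2.
  apply: dle_trans (mxdle_entry a b (mxs2 C)).
  apply: dle_trans (mx2_term _ _ _ _ e).
  apply: dle_mul => //.
  rewrite -(pkq k (D_central h1)) Centry.
  apply: dle_trans (dle_addl _ _).
  apply: dle_trans (mx3_term _ _ _ _ _ c d).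
  rewrite hu hv; apply: dle_mulr; apply: dle_mull.
  exact: dle_trans l1 (hY c d).
Qed.

Lemma N_least : mxle N Y.
Proof.
move=> i j; rewrite N_entry.
apply: (lub_mul_le (Paths_regular B i j) (mxstar_lub B i j)) => w hw.
rewrite -[_ * w * _]mul1r -[_ * w * _]mulr1 mulrA.
apply: (sums_le (Paths_D hw)) => t ht.
rewrite mul1r mulr1; apply: dle_trans (hY i j); exact: D_le_star.
Qed.

End Least.

End Main.

Lemma comm01 (T : rDioidType) (z w : T) : z = 0 \/ z = 1 -> z * w = w * z.
Proof. by case=> ->; rewrite ?mul0r ?mulr0 ?mul1r ?mulr1. Qed.

Lemma sandwich_row (T : rDioidType) (n : nat) (S : 'rV[T]_n) (F : 'cV[T]_n)
  (M : 'M[T]_n) (x y : T) :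
  (forall a b, S a b = 0 \/ S a b = 1) -> (forall a b, F a b = 0 \/ F a b = 1) ->
  x * (S *m M *m F) ord0 ord0 * y = (S *m (x%:M * M * y%:M) *m F) ord0 ord0.
Proof.
move=> hS hF.
rewrite !mxE mulr_sumr mulr_suml; apply: eq_bigr => e _.
rewrite !mxE !mulr_suml !mulr_sumr !mulr_suml; apply: eq_bigr => c _.
have -> : (x%:M * M * y%:M) c e = x * M c e * y.
  change ((x%:M *m M *m y%:M) c e = x * M c e * y).
  by rewrite mul_scal_r mul_scal_l.
rewrite !mulrA (comm01 x (hS _ _)) -!mulrA; congr (_ * (_ * _)).
by rewrite (comm01 y (hF _ _)).
Qed.

Theorem theorem9 (K : rDioidType) (m : nat) (hm : (2 <= m)%N)
    (T : rDioidType) (iK : K -> T) (jC : rlang (Delta m) -> T)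
    (hT : is_tensor iK jC)
    (i0 : 'I_m) (hi0 : nat_of_ord i0 = 0%N)
    (n : nat) (S : 'rV[T]_n) (F : 'cV[T]_n) (X : 'M[K]_n) (W U V : 'M[T]_n)
    (phi : T) :
  (forall a b, S a b = 0 \/ S a b = 1) ->
  (forall a b, F a b = 0 \/ F a b = 1) ->
  (forall a b, W a b = 0 \/ W a b = 1) ->
  (forall a b, U a b = 0 \/ exists2 k : 'I_m, nat_of_ord k <> 0%N & U a b = pgen jC k) ->
  (forall a b, V a b = 0 \/ exists2 k : 'I_m, nat_of_ord k <> 0%N & V a b = qgen jC k) ->
  phi = (S *m mxstar (U + map_mx iK X + V + W *m (qgen jC i0 * pgen jC i0)%:M) *m F)
          ord0 ord0 ->
  exists N : 'M[T]_n,
    [/\ mxle (mxstar (U *m N *m V + map_mx iK X)) N,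
        (forall Y : 'M[T]_n, mxle (mxstar (U *m Y *m V + map_mx iK X)) Y -> mxle N Y),
        pgen jC i0 * phi * qgen jC i0 = (S *m N *m mxstar (W *m N) *m F) ord0 ord0 &
        centralizerC jC ((S *m N *m mxstar (W *m N) *m F) ord0 ord0)].
Proof.
move=> hS hF hW hU hV ->.
set p0 := pgen jC i0; set q0 := qgen jC i0.
pose NN := N iK jC i0 X U V.
have hNc : forall a b, central jC (NN a b) := N_central hT hi0 X hU hV.
exists NN; split.
- apply/mxdleP; exact: (N_fix hT hi0 X hU hV).
- move=> Y hY; exact: (N_least hT hi0 hU hV hY).
- rewrite sandwich_row //.
  set B := U + map_mx iK X + V.
  have hWq : W * q0%:M = q0%:M * W.
    apply: scal_comm => a b; exact: comm01.
  have -> : W *m (q0 * p0)%:M = q0%:M * (W * p0%:M).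
    by rewrite scalar_mxM; change (W * (q0%:M * p0%:M) = q0%:M * (W * p0%:M));
       rewrite mulrA hWq mulrA.
  have key : p0%:M * mxstar (B + q0%:M * (W * p0%:M)) * q0%:M = NN *m mxstar (W *m NN).
    transitivity (NN * mxstar (W * NN)); last by [].
    rewrite mx_denest.
    have -> : q0%:M * (W * p0%:M) * mxstar B = q0%:M * (W * p0%:M * mxstar B) by rewrite -mulrA.
    rewrite -!mulrA mx_slide /NN /N -/p0 -/q0 -/B.
    by rewrite !mulrA.
  by rewrite key mulmxA.
- have hS' : forall i j, central jC (S i j) := fun i j => central01 jC (hS i j).
  have hF' : forall i j, central jC (F i j) := fun i j => central01 jC (hF i j).
  have hW' : forall i j, central jC (W i j) := fun i j => central01 jC (hW i j).
  have hWN := central_mx_mul hW' hNc.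
  have hZ := mxstar_central hWN.
  exact: (central_mx_mul (central_mx_mul (central_mx_mul hS' hNc) hZ) hF').
Qed.
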